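(* Let $A,B$ be quantum systems of dimensions $m_A,m_B$ and $\psi_{AB}$ a bipartite state with $\psi_A=\mathrm{id}_{m_A}/m_A$ and $\psi_B=\mathrm{id}_{m_B}/m_B$, and let $\mathcal{T}:\mathcal{M}(B)\to\mathcal{M}(A)$ be its Markov super-operator. For any $Q\in\mathcal{M}(B)$, the maximum $$\max\{|\mathrm{Tr}((P^\dagger\otimes Q)\psi_{AB})|: P\in\mathcal{M}(A),\ \|P\|'_2=1\}$$ equals $\|\mathcal{T}(Q)\|'_2$, and (when $\mathcal{T}(Q)\ne0$) it is achieved by $P^*=\mathcal{T}(Q)/\|\mathcal{T}(Q)\|'_2$. Consequently $$\rho(\psi_{AB})=\max\{\|\mathcal{T}(Q)\|'_2: Q\in\mathcal{M}(B),\ \mathrm{Tr}Q=0,\ \|Q\|'_2=1\}.$$ Moreover, the supremum defining $\rho(\psi_{AB})$ is achieved by a pair of Hermitian operators $(P,Q)$.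
   Context: $\mathcal{M}(A)$ is the space of linear operators on $A\cong\mathbb{C}^{m_A}$, with inner product $\langle X,Y\rangle=\frac1{m_A}\mathrm{Tr}X^\dagger Y$ and normalized 2-norm $\|X\|'_2=\langle X,X\rangle^{1/2}$ (similarly on $B$ with $1/m_B$). The Markov super-operator $\mathcal{T}:\mathcal{M}(B)\to\mathcal{M}(A)$ is defined by $\mathrm{Tr}((M^\dagger\otimes Q)\psi_{AB})=\langle M,\mathcal{T}(Q)\rangle$ for all $M\in\mathcal{M}(A)$, $Q\in\mathcal{M}(B)$ (equivalently $\mathcal{T}(Q)=m_A\mathrm{Tr}_B((\mathrm{id}\otimes Q)\psi_{AB})$). The maximal correlation is $\rho(\psi_{AB})=\sup\{|\mathrm{Tr}((P^\dagger\otimes Q)\psi_{AB})|: P\in\mathcal{M}(A),Q\in\mathcal{M}(B),\ \mathrm{Tr}P=\mathrm{Tr}Q=0,\ \|P\|'_2=\|Q\|'_2=1\}$. *)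

(* Defs.v *)
From HB Require Import structures.
From mathcomp Require Import all_boot all_order all_algebra.
From mathcomp Require Import complex mxtens.
From mathcomp Require Import boolp classical_sets reals.
Set Implicit Arguments. Unset Strict Implicit. Unset Printing Implicit Defensive.
Import Order.TTheory GRing.Theory Num.Theory.
Local Open Scope ring_scope.

Section QDefs.
Variable R : realType.
Local Notation C := R[i].

Definition adjmx {m n} (X : 'M[C]_(m, n)) : 'M[C]_(n, m) :=
  (map_mx (@Num.conj C) X)^T.

Definition is_hermitian {m} (X : 'M[C]_m) : Prop := adjmx X = X.

Definition is_psd {m} (X : 'M[C]_m) : Prop :=
  is_hermitian X /\ forall v : 'cV[C]_m, 0 <= (adjmx v *m X *m v) 0 0.

Definition is_state {m} (X : 'M[C]_m) : Prop := is_psd X /\ \tr X = 1.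

Definition ptraceB {mA mB} (X : 'M[C]_(mA * mB)) : 'M[C]_mA :=
  \matrix_(i, j) \sum_(k < mB) X (mxtens_index (i, k)) (mxtens_index (j, k)).
Definition ptraceA {mA mB} (X : 'M[C]_(mA * mB)) : 'M[C]_mB :=
  \matrix_(i, j) \sum_(k < mA) X (mxtens_index (k, i)) (mxtens_index (k, j)).

Definition nip {m} (X Y : 'M[C]_m) : C := (m%:R)^-1 * \tr (adjmx X *m Y).

(* normalized 2-norm ||X||'_2 = <X,X>^(1/2)  (<X,X> is real nonnegative) *)
Definition norm2' {m} (X : 'M[C]_m) : R := Num.sqrt (complex.Re (nip X X)).

Definition corr {mA mB} (psi : 'M[C]_(mA * mB)) (P : 'M[C]_mA) (Q : 'M[C]_mB) : C :=
  \tr ((adjmx P *t Q) *m psi).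

Definition markovT {mA mB} (psi : 'M[C]_(mA * mB)) (Q : 'M[C]_mB) : 'M[C]_mA :=
  (mA%:R) *: ptraceB ((1%:M *t Q) *m psi).

Definition cabs (z : C) : R := complex.Re `|z|.

Definition maxcorr {mA mB} (psi : 'M[C]_(mA * mB)) : R :=
  sup [set r : R | exists (P : 'M[C]_mA) (Q : 'M[C]_mB),
         [/\ \tr P = 0, \tr Q = 0, norm2' P = 1, norm2' Q = 1
           & r = cabs (corr psi P Q)]].

End QDefs.

(* Main.v *)
Require Import Defs.
From HB Require Import structures.
From mathcomp Require Import all_boot all_order all_algebra.
From mathcomp Require Import complex mxtens.
From mathcomp Require Import boolp classical_sets reals.
From mathcomp Require Import ring lra.
From mathcomp Require Import functions topology normedtype derive.
Import Order.TTheory GRing.Theory Num.Theory.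
Set Implicit Arguments. Unset Strict Implicit. Unset Printing Implicit Defensive.
Local Open Scope ring_scope.
Import numFieldNormedType.Exports.

Section Alg.
Variable R : realType.
Local Notation C := R[i].

Lemma cjD (x y : C) : Num.conj (x + y) = Num.conj x + Num.conj y.
Proof. exact: rmorphD. Qed.
Lemma cjB (x y : C) : Num.conj (x - y) = Num.conj x - Num.conj y.
Proof. exact: rmorphB. Qed.
Lemma cjN (x : C) : Num.conj (- x) = - Num.conj x.
Proof. exact: rmorphN. Qed.
Lemma cjM (x y : C) : Num.conj (x * y) = Num.conj x * Num.conj y.
Proof. exact: rmorphM. Qed.
Lemma cjV (x : C) : Num.conj (x^-1) = (Num.conj x)^-1.
Proof. exact: fmorphV. Qed.
Lemma cjn n : Num.conj (n%:R : C) = n%:R.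
Proof. exact: rmorph_nat. Qed.
Lemma cj0 : Num.conj (0 : C) = 0.
Proof. exact: rmorph0. Qed.
Lemma cj1 : Num.conj (1 : C) = 1.
Proof. exact: rmorph1. Qed.
Lemma cjK (x : C) : Num.conj (Num.conj x) = x.
Proof. exact: conjCK. Qed.
Lemma cjR (x : R) : Num.conj ((x%:C)%C : C) = (x%:C)%C.
Proof. exact: conjc_real. Qed.
Lemma cj_sum I (r : seq I) (P : pred I) (F : I -> C) :
  Num.conj (\sum_(i <- r | P i) F i) = \sum_(i <- r | P i) Num.conj (F i).
Proof. exact: rmorph_sum. Qed.

Lemma sum_tens m n (F : 'I_(m * n) -> C) :
  \sum_(a < m * n) F a = \sum_(i < m) \sum_(k < n) F (@mxtens_index m n (i, k)).
Proof.
rewrite pair_big /= (reindex (@mxtens_index m n)) /=; last first.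
  by exists (@mxtens_unindex m n) => x _; [apply: mxtens_indexK | apply: mxtens_unindexK].
by apply: eq_bigr => -[i k].
Qed.

Lemma adjmxE m n (X : 'M[C]_(m, n)) i j : adjmx X i j = Num.conj (X j i).
Proof. by rewrite !mxE. Qed.

Lemma adjmxK m n (X : 'M[C]_(m, n)) : adjmx (adjmx X) = X.
Proof. by apply/matrixP => i j; rewrite !adjmxE cjK. Qed.

Lemma adjmxD m n (X Y : 'M[C]_(m, n)) : adjmx (X + Y) = adjmx X + adjmx Y.
Proof. by apply/matrixP => i j; rewrite !mxE cjD. Qed.

Lemma adjmxN m n (X : 'M[C]_(m, n)) : adjmx (- X) = - adjmx X.
Proof. by apply/matrixP => i j; rewrite !mxE cjN. Qed.

Lemma adjmxB m n (X Y : 'M[C]_(m, n)) : adjmx (X - Y) = adjmx X - adjmx Y.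
Proof. by rewrite adjmxD adjmxN. Qed.

Lemma adjmxZ m n (c : C) (X : 'M[C]_(m, n)) : adjmx (c *: X) = Num.conj c *: adjmx X.
Proof. by apply/matrixP => i j; rewrite !mxE cjM. Qed.

Lemma adjmx0 m n : adjmx (0 : 'M[C]_(m, n)) = 0.
Proof. by apply/matrixP => i j; rewrite !mxE cj0. Qed.

Lemma adjmxM m n p (X : 'M[C]_(m, n)) (Y : 'M[C]_(n, p)) :
  adjmx (X *m Y) = adjmx Y *m adjmx X.
Proof.
apply/matrixP => i j; rewrite !mxE cj_sum; apply: eq_bigr => k _.
by rewrite !mxE cjM mulrC.
Qed.

Lemma adjmx1 m : adjmx (1%:M : 'M[C]_m) = 1%:M.
Proof. by apply/matrixP => i j; rewrite !mxE cjn eq_sym. Qed.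

Lemma adjmx_tens m n p q (X : 'M[C]_(m, n)) (Y : 'M[C]_(p, q)) :
  adjmx (X *t Y) = adjmx X *t adjmx Y.
Proof. by apply/matrixP => i j; rewrite !mxE cjM. Qed.

Lemma tr_adj m (X : 'M[C]_m) : \tr (adjmx X) = Num.conj (\tr X).
Proof. by rewrite /mxtrace cj_sum; apply: eq_bigr => i _; rewrite !mxE. Qed.

Lemma trMC m n (X : 'M[C]_(m, n)) (Y : 'M[C]_(n, m)) : \tr (X *m Y) = \tr (Y *m X).
Proof. exact: mxtrace_mulC. Qed.

Lemma ptraceB_tr mA mB (P : 'M[C]_mA) (Y : 'M[C]_(mA * mB)) :
  \tr ((P *t 1%:M) *m Y) = \tr (P *m ptraceB Y).
Proof.
rewrite /mxtrace sum_tens.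
under eq_bigr => i _ do under eq_bigr => k _ do rewrite mxE sum_tens.
under [RHS]eq_bigr => i _ do rewrite mxE.
apply: eq_bigr => i _.
under eq_bigr => k _ do under eq_bigr => j _ do
  (rewrite (bigD1 k) //= big1 ?addr0; last by move=> l /negbTE lk; rewrite tensmxE mxE eq_sym lk mulr0 mul0r).
under eq_bigr => k _ do under eq_bigr => j _ do rewrite tensmxE mxE eqxx mulr1.
rewrite exchange_big /=; apply: eq_bigr => j _; rewrite mxE mulr_sumr.
done.
Qed.

Lemma ptraceA_tr mA mB (Q : 'M[C]_mB) (Y : 'M[C]_(mA * mB)) :
  \tr ((1%:M *t Q) *m Y) = \tr (Q *m ptraceA Y).
Proof.
rewrite /mxtrace sum_tens.
under eq_bigr => i _ do under eq_bigr => k _ do rewrite mxE sum_tens.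
under [RHS]eq_bigr => i _ do rewrite mxE.
rewrite exchange_big /=; apply: eq_bigr => k _.
have E : forall i : 'I_mA, \sum_(j < mA) \sum_(l < mB)
    (1%:M *t Q) (mxtens_index (i, k)) (mxtens_index (j, l)) *
    Y (mxtens_index (j, l)) (mxtens_index (i, k)) =
    \sum_(l < mB) (1%:M *t Q) (mxtens_index (i, k)) (mxtens_index (i, l)) *
    Y (mxtens_index (i, l)) (mxtens_index (i, k)).
  move=> i; rewrite (bigD1 i) //= [X in _ + X]big1 ?addr0 // => j ji.
  by apply: big1 => l _; rewrite tensmxE mxE eq_sym (negbTE ji) mul0r mul0r.
under eq_bigr => i _ do rewrite E.
under eq_bigr => i _ do under eq_bigr => j _ do rewrite tensmxE mxE eqxx mul1r.
rewrite exchange_big /=; apply: eq_bigr => j _; rewrite mxE mulr_sumr.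
done.
Qed.


Lemma tensmx_mulE m n p q (A : 'M[C]_m) (B : 'M[C]_n) (X : 'M[C]_(m, p)) (Y : 'M[C]_(n, q)) :
  (A *t B) *m (X *t Y) = (A *m X) *t (B *m Y).
Proof. exact: tensmx_mul. Qed.

Lemma tensmxDr m n p q (A : 'M[C]_(m, n)) (X Y : 'M[C]_(p, q)) :
  A *t (X + Y) = A *t X + A *t Y.
Proof. by apply/matrixP => i j; rewrite !mxE mulrDr. Qed.

Lemma tensmxZr m n p q (A : 'M[C]_(m, n)) c (X : 'M[C]_(p, q)) :
  A *t (c *: X) = c *: (A *t X).
Proof. by apply/matrixP => i j; rewrite !mxE mulrCA. Qed.

Lemma ptraceBD mA mB (X Y : 'M[C]_(mA * mB)) : ptraceB (X + Y) = ptraceB X + ptraceB Y.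
Proof. by apply/matrixP => i j; rewrite !mxE -big_split; apply: eq_bigr => k _; rewrite mxE. Qed.

Lemma ptraceBZ mA mB c (X : 'M[C]_(mA * mB)) : ptraceB (c *: X) = c *: ptraceB X.
Proof. by apply/matrixP => i j; rewrite !mxE mulr_sumr; apply: eq_bigr => k _; rewrite mxE. Qed.

Lemma markovTD mA mB (psi : 'M[C]_(mA * mB)) X Y :
  markovT psi (X + Y) = markovT psi X + markovT psi Y.
Proof. by rewrite /markovT tensmxDr mulmxDl ptraceBD scalerDr. Qed.

Lemma markovTZ mA mB (psi : 'M[C]_(mA * mB)) c X :
  markovT psi (c *: X) = c *: markovT psi X.
Proof. by rewrite /markovT tensmxZr -scalemxAl ptraceBZ scalerA mulrC -scalerA. Qed.

Lemma markovT0 mA mB (psi : 'M[C]_(mA * mB)) : markovT psi 0 = 0.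
Proof. by rewrite -(scale0r 0) markovTZ scale0r. Qed.

Definition N2 m (X : 'M[C]_m) : R := complex.Re (nip X X).

Lemma nip_conj m (X Y : 'M[C]_m) : nip Y X = Num.conj (nip X Y).
Proof.
rewrite /nip -[X in _ *m X](adjmxK X) -adjmxM tr_adj.
by rewrite cjM cjV cjn.
Qed.

Lemma nipDr m (X Y Z : 'M[C]_m) : nip X (Y + Z) = nip X Y + nip X Z.
Proof. by rewrite /nip mulmxDr mxtraceD mulrDr. Qed.

Lemma nipZr m (X Y : 'M[C]_m) c : nip X (c *: Y) = c * nip X Y.
Proof. by rewrite /nip -scalemxAr mxtraceZ mulrCA. Qed.

Lemma nipNr m (X Y : 'M[C]_m) : nip X (- Y) = - nip X Y.
Proof. by rewrite -scaleN1r nipZr mulN1r. Qed.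

Lemma nipBr m (X Y Z : 'M[C]_m) : nip X (Y - Z) = nip X Y - nip X Z.
Proof. by rewrite nipDr nipNr. Qed.

Lemma nipDl m (X Y Z : 'M[C]_m) : nip (Y + Z) X = nip Y X + nip Z X.
Proof. by rewrite nip_conj nipDr cjD -!nip_conj. Qed.

Lemma nipZl m (X Y : 'M[C]_m) c : nip (c *: Y) X = Num.conj c * nip Y X.
Proof. by rewrite nip_conj nipZr cjM -nip_conj. Qed.

Lemma nipBl m (X Y Z : 'M[C]_m) : nip (Y - Z) X = nip Y X - nip Z X.
Proof. by rewrite nip_conj nipBr cjB -!nip_conj. Qed.

Lemma nip0r m (X : 'M[C]_m) : nip X 0 = 0.
Proof. by rewrite /nip mulmx0 linear0 mulr0. Qed.

Lemma nip_self m (X : 'M[C]_m) :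
  nip X X = (m%:R)^-1 * \sum_(i < m) \sum_(k < m) `|X k i| ^+ 2.
Proof.
rewrite /nip /mxtrace; congr (_ * _); apply: eq_bigr => i _.
rewrite mxE; apply: eq_bigr => k _; rewrite !mxE normCK mulrC //.
Qed.

Lemma nip_self_ge0 m (X : 'M[C]_m) : 0 <= nip X X.
Proof.
rewrite nip_self mulr_ge0 ?invr_ge0 ?ler0n //.
by apply: sumr_ge0 => i _; apply: sumr_ge0 => k _; rewrite exprn_ge0.
Qed.

Lemma ge0_C (x : C) : 0 <= x -> x = ((complex.Re x)%:C)%C /\ 0 <= complex.Re x.
Proof.
move=> x0; split; first by rewrite RRe_real // ger0_real.
by move: x0; rewrite lecE => /andP[_]. 
Qed.

Lemma N2E m (X : 'M[C]_m) : nip X X = ((N2 X)%:C)%C.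
Proof. by case: (ge0_C (nip_self_ge0 X)). Qed.

Lemma N2_ge0 m (X : 'M[C]_m) : 0 <= N2 X.
Proof. by case: (ge0_C (nip_self_ge0 X)). Qed.

Lemma norm2'E m (X : 'M[C]_m) : norm2' X = Num.sqrt (N2 X).
Proof. by []. Qed.

Lemma corr_nip mA mB (psi : 'M[C]_(mA * mB)) P Q : (0 < mA)%N ->
  corr psi P Q = nip P (markovT psi Q).
Proof.
move=> hA; rewrite /corr /nip /markovT -scalemxAr mxtraceZ mulrA mulVf ?mul1r; last first.
  by rewrite pnatr_eq0 -lt0n.
rewrite -ptraceB_tr mulmxA tensmx_mulE mulmx1 mul1mx //.
Qed.


Lemma cabsE (z : C) : cabs z = Num.sqrt (complex.Re z ^+ 2 + complex.Im z ^+ 2).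
Proof. by rewrite /cabs normc_def. Qed.

Lemma cabs_ge0 (z : C) : 0 <= cabs z.
Proof. by rewrite cabsE sqrtr_ge0. Qed.

Lemma cabsR (x : R) : cabs ((x%:C)%C) = `|x|.
Proof. by rewrite cabsE /= expr0n addr0 sqrtr_sqr. Qed.

Lemma normC_cabs (z : C) : `|z| = ((cabs z)%:C)%C.
Proof. by rewrite /cabs normc_def. Qed.

Lemma N2_eq1 m (X : 'M[C]_m) : norm2' X = 1 -> nip X X = 1.
Proof.
move=> h; rewrite N2E; have := sqr_sqrtr (N2_ge0 X); rewrite -norm2'E h expr1n => <- //.
Qed.

Lemma cs_unit m (P Y : 'M[C]_m) : norm2' P = 1 -> cabs (nip P Y) <= norm2' Y.
Proof.
move=> /N2_eq1 hP; set c := nip P Y.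
have hZ : nip (Y - c *: P) (Y - c *: P) = nip Y Y - c * Num.conj c.
  rewrite !nipBl !nipBr !nipZl !nipZr hP -/c (nip_conj P Y) -/c.
  by rewrite mulr1 [Num.conj c * c]mulrC; ring.
have := nip_self_ge0 (Y - c *: P); rewrite hZ subr_ge0 -normCK normC_cabs N2E.
rewrite -rmorphXn lecR => h.
rewrite norm2'E -(ger0_norm (cabs_ge0 c)) -sqrtr_sqr ler_sqrt //.
exact: N2_ge0.
Qed.

Lemma N2_eq0 m (X : 'M[C]_m) : N2 X = 0 -> X = 0.
Proof.
case: m X => [X _|m X h]; first by apply/matrixP => -[].
have h2 : nip X X = 0 by rewrite N2E h.
move: h2; rewrite nip_self => /eqP; rewrite mulf_eq0 invr_eq0 pnatr_eq0 /= => /eqP hs.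
apply/matrixP => k i; rewrite mxE.
have hi : \sum_(k < m.+1) `|X k i| ^+ 2 = 0.
  apply: (psumr_eq0P _ hs) => // j _.
  by apply: sumr_ge0 => l _; rewrite exprn_ge0.
have := psumr_eq0P _ hi (isT : true) (i := k).
move=> /(_ _) /eqP.
  by rewrite sqrf_eq0 normr_eq0 => /(_ (fun j _ => exprn_ge0 2 (normr_ge0 _))) /eqP.
Qed.


Lemma ptraceB_swap mA mB (Y : 'M[C]_(mA * mB)) (Q : 'M[C]_mB) :
  ptraceB (Y *m (1%:M *t Q)) = ptraceB ((1%:M *t Q) *m Y).
Proof.
apply/matrixP => i j; rewrite !mxE.
have E1 : forall k, (Y *m (1%:M *t Q)) (mxtens_index (i, k)) (mxtens_index (j, k)) =
    \sum_(b < mB) Y (mxtens_index (i, k)) (mxtens_index (j, b)) * Q b k.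
  move=> k; rewrite mxE sum_tens (bigD1 j) //= [X in _ + X]big1 ?addr0.
    by apply: eq_bigr => b _; rewrite tensmxE mxE eqxx mul1r.
  by move=> a /negbTE aj; apply: big1 => b _; rewrite tensmxE mxE aj mul0r mulr0.
have E2 : forall k, ((1%:M *t Q) *m Y) (mxtens_index (i, k)) (mxtens_index (j, k)) =
    \sum_(b < mB) Q k b * Y (mxtens_index (i, b)) (mxtens_index (j, k)).
  move=> k; rewrite mxE sum_tens (bigD1 i) //= [X in _ + X]big1 ?addr0.
    by apply: eq_bigr => b _; rewrite tensmxE mxE eqxx mul1r.
  by move=> a; rewrite eq_sym => /negbTE aj; apply: big1 => b _; rewrite tensmxE mxE aj mul0r mul0r.
under eq_bigr => k _ do rewrite E1.
under [RHS]eq_bigr => k _ do rewrite E2.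
rewrite [RHS]exchange_big /=; apply: eq_bigr => k _; apply: eq_bigr => b _.
by rewrite mulrC.
Qed.

Lemma adj_ptraceB mA mB (Y : 'M[C]_(mA * mB)) : adjmx (ptraceB Y) = ptraceB (adjmx Y).
Proof. by apply/matrixP => i j; rewrite !mxE cj_sum; apply: eq_bigr => k _; rewrite !mxE. Qed.

Lemma markovT_adj mA mB (psi : 'M[C]_(mA * mB)) Q : adjmx psi = psi ->
  adjmx (markovT psi Q) = markovT psi (adjmx Q).
Proof.
move=> hpsi; rewrite /markovT adjmxZ cjn adj_ptraceB adjmxM hpsi adjmx_tens adjmx1.
by rewrite ptraceB_swap.
Qed.

Lemma tens11 mA mB : (1%:M : 'M[C]_mA) *t (1%:M : 'M[C]_mB) = 1%:M.
Proof.
apply/matrixP => a b; case: (mxtens_indexP a) => i j; case: (mxtens_indexP b) => k l.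
rewrite tensmxE !mxE (inj_eq (can_inj (@mxtens_indexK mA mB))) xpair_eqE.
by case: (i == k); case: (j == l); rewrite /= ?mulr1 ?mulr0 ?mul0r.
Qed.

Lemma tr_ptraceB mA mB (Y : 'M[C]_(mA * mB)) : \tr (ptraceB Y) = \tr Y.
Proof.
by rewrite -[ptraceB Y]mul1mx -ptraceB_tr tens11 mul1mx.
Qed.

Lemma tr_markovT mA mB (psi : 'M[C]_(mA * mB)) Q :
  \tr (markovT psi Q) = mA%:R * \tr (Q *m ptraceA psi).
Proof. by rewrite /markovT mxtraceZ tr_ptraceB ptraceA_tr. Qed.


Lemma ReC (x : R) : complex.Re ((x%:C)%C : C) = x.
Proof. by []. Qed.

Lemma N2_scale m (x : R) (X : 'M[C]_m) : N2 ((x%:C)%C *: X) = x ^+ 2 * N2 X.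
Proof.
rewrite /N2 nipZl nipZr cjR N2E mulrA -!rmorphM /=.
by rewrite expr2.
Qed.

Lemma nip_scaleR m (x : R) (X Y : 'M[C]_m) : nip ((x%:C)%C *: X) Y = (x%:C)%C * nip X Y.
Proof. by rewrite nipZl cjR. Qed.

Lemma cj_i : Num.conj ('i%C : C) = - 'i%C.
Proof. by apply/eqP; rewrite eq_complex /= oppr0 !eqxx. Qed.

Lemma i_sqr : ('i%C : C) * 'i%C = -1.
Proof. by rewrite -expr2 sqr_i. Qed.

Lemma nip_herm_sym m (A B : 'M[C]_m) : is_hermitian A -> is_hermitian B ->
  nip A B = nip B A.
Proof. by move=> hA hB; rewrite /nip hA hB mxtrace_mulC. Qed.

Lemma N2_herm_split m (A B : 'M[C]_m) : is_hermitian A -> is_hermitian B ->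
  N2 (A + 'i%C *: B) = N2 A + N2 B.
Proof.
move=> hA hB; rewrite /N2 nipDl !nipDr !nipZl !nipZr cj_i (nip_herm_sym hA hB).
rewrite N2E (N2E B); set n := nip B A; set a := ((N2 A)%:C)%C; set b := ((N2 B)%:C)%C.
have -> : a + 'i%C * n + (- 'i%C * n + - 'i%C * ('i%C * b)) = a + b - ('i%C * 'i%C + 1) * b by ring.
rewrite i_sqr addNr mul0r subr0 /a /b.
by rewrite -rmorphD.
Qed.

Lemma herm_decomp m (Q : 'M[C]_m) :
  let H1 := ((2^-1 : R)%:C)%C *: (Q + adjmx Q) in
  let H2 := (- ('i%C / 2)) *: (Q - adjmx Q) in
  [/\ is_hermitian H1, is_hermitian H2 & Q = H1 + 'i%C *: H2].
Proof.
move=> H1 H2; split.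
- by rewrite /is_hermitian /H1 adjmxZ cjR adjmxD adjmxK addrC.
- rewrite /is_hermitian /H2 adjmxZ adjmxB adjmxK cjN cjM cjV cj_i.
  have -> : Num.conj (2 : C) = 2 by rewrite cjn.
  by rewrite -opprB scalerN -scaleNr; congr (_ *: _); rewrite opprK mulNr.
- apply/matrixP => i j; rewrite /H1 /H2 !mxE.
  have -> : ((2^-1 : R)%:C)%C = (2 : C)^-1 by rewrite rmorphV ?unitfE ?pnatr_eq0 // rmorph_nat.
  set q := Q i j; set r := Num.conj (Q j i).
  have -> : 2^-1 * (q + r) + 'i%C * (- ('i%C / 2) * (q - r)) =
     2^-1 * (q + r) - ('i%C * 'i%C) * 2^-1 * (q - r) by ring.
  by rewrite i_sqr; field.
Qed.


Lemma tr_delta m (i : 'I_m) : \tr (delta_mx i i : 'M[C]_m) = 1.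
Proof.
rewrite /mxtrace (bigD1 i) //= big1 ?addr0; first by rewrite mxE !eqxx.
by move=> j /negbTE ji; rewrite mxE ji.
Qed.

Lemma adj_delta m (i : 'I_m) : adjmx (delta_mx i i : 'M[C]_m) = delta_mx i i.
Proof. by apply/matrixP => a b; rewrite !mxE cjn andbC. Qed.

Lemma N2_one m : (0 < m)%N -> N2 (1%:M : 'M[C]_m) = 1.
Proof.
move=> hm; rewrite /N2 /nip adjmx1 mul1mx mxtrace1 mulVf ?pnatr_eq0 -?lt0n //.
Qed.

Lemma tz_unit m : (1 < m)%N -> exists X : 'M[C]_m, [/\ is_hermitian X, \tr X = 0 & N2 X = 1].
Proof.
move=> hm; have h0 : (0 < m)%N by apply: ltn_trans hm.
pose i0 := Ordinal h0; pose i1 := Ordinal hm.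
have i01 : i0 != i1 by [].
pose D : 'M[C]_m := delta_mx i0 i0 - delta_mx i1 i1.
have hD : is_hermitian D by rewrite /is_hermitian /D adjmxB !adj_delta.
have tD : \tr D = 0 by rewrite /D linearB /= !tr_delta subrr.
have DD : adjmx D *m D = delta_mx i0 i0 + delta_mx i1 i1.
  rewrite hD /D mulmxBl !mulmxBr !mul_delta_mx !mul_delta_mx_0 // 1?eq_sym //.
  by rewrite subr0 sub0r opprK.
have ND : N2 D = 2 / m%:R.
  rewrite /N2 /nip DD mxtraceD !tr_delta.
  have -> : (m%:R : C)^-1 * (1 + 1) = ((2 / m%:R : R)%:C)%C.
    by rewrite rmorphM rmorphV ?unitfE ?pnatr_eq0 -?lt0n // !rmorph_nat mulrC.
  by [].
exists ((Num.sqrt (m%:R / 2))%:C%C *: D); split.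
- by rewrite /is_hermitian adjmxZ cjR hD.
- by rewrite mxtraceZ tD mulr0.
- rewrite N2_scale ND sqr_sqrtr ?divr_ge0 ?ler0n //.
  rewrite mulrA divfK ?pnatr_eq0 // divff // pnatr_eq0 -lt0n //.
Qed.

End Alg.

Section Top.
Local Open Scope classical_set_scope.
Local Open Scope ring_scope.
Variable R : realType.
Local Notation C := R[i].
Variable n : nat.
Local Notation V := 'rV[R]_n.

Definition cc (g : V -> C) := continuous (fun z => complex.Re (g z)) /\ continuous (fun z => complex.Im (g z)).

Lemma cc_ext (f g : V -> C) : (forall z, f z = g z) -> cc f -> cc g.
Proof. by move=> e; have -> : g = f by apply: funext => z; rewrite e. Qed.

Lemma cc_cst (c : C) : cc (fun _ => c).
Proof. by split; apply: cst_continuous. Qed.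

Lemma cc_add (f g : V -> C) : cc f -> cc g -> cc (fun z => f z + g z).
Proof.
move=> [f1 f2] [g1 g2]; split.
- have -> : (fun z => complex.Re (f z + g z)) = (fun z => complex.Re (f z) + complex.Re (g z)).
    by apply: funext => z; case: (f z) => ? ?; case: (g z).
  by move=> x; exact: (continuousD (f1 x) (g1 x)).
- have -> : (fun z => complex.Im (f z + g z)) = (fun z => complex.Im (f z) + complex.Im (g z)).
    by apply: funext => z; case: (f z) => ? ?; case: (g z).
  by move=> x; exact: (continuousD (f2 x) (g2 x)).
Qed.

Lemma cc_opp (f : V -> C) : cc f -> cc (fun z => - f z).
Proof.
move=> [f1 f2]; split.
- have -> : (fun z => complex.Re (- f z)) = (fun z => - complex.Re (f z)).
    by apply: funext => z; case: (f z).
  by move=> x; exact: (continuousN (f1 x)).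
- have -> : (fun z => complex.Im (- f z)) = (fun z => - complex.Im (f z)).
    by apply: funext => z; case: (f z).
  by move=> x; exact: (continuousN (f2 x)).
Qed.

Lemma cc_mul (f g : V -> C) : cc f -> cc g -> cc (fun z => f z * g z).
Proof.
move=> [f1 f2] [g1 g2]; split.
- have -> : (fun z => complex.Re (f z * g z)) =
     (fun z => complex.Re (f z) * complex.Re (g z) - complex.Im (f z) * complex.Im (g z)).
    by apply: funext => z; case: (f z) => ? ?; case: (g z).
  by move=> x; exact: (continuousB (continuousM (f1 x) (g1 x)) (continuousM (f2 x) (g2 x))).
- have -> : (fun z => complex.Im (f z * g z)) =
     (fun z => complex.Re (f z) * complex.Im (g z) + complex.Im (f z) * complex.Re (g z)).
    by apply: funext => z; case: (f z) => ? ?; case: (g z).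
  by move=> x; exact: (continuousD (continuousM (f1 x) (g2 x)) (continuousM (f2 x) (g1 x))).
Qed.

Lemma cc_conj (f : V -> C) : cc f -> cc (fun z => Num.conj (f z)).
Proof.
move=> [f1 f2]; split.
- have -> : (fun z => complex.Re (Num.conj (f z))) = (fun z => complex.Re (f z)).
    by apply: funext => z; case: (f z).
  by [].
- have -> : (fun z => complex.Im (Num.conj (f z))) = (fun z => - complex.Im (f z)).
    by apply: funext => z; case: (f z).
  by move=> x; exact: (continuousN (f2 x)).
Qed.

Lemma cc_sum I (r : seq I) (P : pred I) (F : I -> V -> C) :
  (forall i, cc (F i)) -> cc (fun z => \sum_(i <- r | P i) F i z).
Proof.
move=> hF; elim: r => [|a r IH].
  by apply: (cc_ext (f := fun _ => 0)); [move=> z; rewrite big_nil | exact: cc_cst].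
apply: (cc_ext (f := fun z => (if P a then F a z else 0) + \sum_(i <- r | P i) F i z)).
  by move=> z; rewrite big_cons; case: (P a); rewrite ?add0r.
apply: cc_add => //; case: (P a) => //; exact: cc_cst.
Qed.

Lemma cc_coord (a b : 'I_n) : cc (fun z => ((z 0 a) +i* (z 0 b))%C).
Proof. by split; apply: coord_continuous. Qed.

Definition mc p q (F : V -> 'M[C]_(p, q)) := forall i j, cc (fun z => F z i j).

Lemma mc_mul p q r (F : V -> 'M[C]_(p, q)) (G : V -> 'M[C]_(q, r)) :
  mc F -> mc G -> mc (fun z => F z *m G z).
Proof.
move=> hF hG i j; apply: (cc_ext (f := fun z => \sum_k F z i k * G z k j)).
  by move=> z; rewrite mxE.
by apply: cc_sum => k; apply: cc_mul.
Qed.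

Lemma mc_add p q (F G : V -> 'M[C]_(p, q)) : mc F -> mc G -> mc (fun z => F z + G z).
Proof.
move=> hF hG i j; apply: (cc_ext (f := fun z => F z i j + G z i j)).
  by move=> z; rewrite mxE.
exact: cc_add.
Qed.

Lemma mc_scale p q (c : C) (F : V -> 'M[C]_(p, q)) : mc F -> mc (fun z => c *: F z).
Proof.
move=> hF i j; apply: (cc_ext (f := fun z => c * F z i j)).
  by move=> z; rewrite mxE.
by apply: cc_mul => //; apply: cc_cst.
Qed.

Lemma mc_cst p q (M : 'M[C]_(p, q)) : mc (fun _ => M).
Proof. by move=> i j; apply: cc_cst. Qed.

Lemma mc_adj p q (F : V -> 'M[C]_(p, q)) : mc F -> mc (fun z => adjmx (F z)).
Proof.
move=> hF i j; apply: (cc_ext (f := fun z => Num.conj (F z j i))).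
  by move=> z; rewrite !mxE.
exact: cc_conj.
Qed.

Lemma mc_tens p q r s (F : V -> 'M[C]_(p, q)) (G : V -> 'M[C]_(r, s)) :
  mc F -> mc G -> mc (fun z => F z *t G z).
Proof.
move=> hF hG i j; apply: (cc_ext (f := fun z => F z (mxtens_unindex i).1 (mxtens_unindex j).1
                 * G z (mxtens_unindex i).2 (mxtens_unindex j).2)).
  by move=> z; rewrite !mxE.
exact: cc_mul.
Qed.

Lemma mc_ptraceB p q (F : V -> 'M[C]_(p * q)) : mc F -> mc (fun z => ptraceB (F z)).
Proof.
move=> hF i j; apply: (cc_ext (f := fun z => \sum_(k < q) F z (mxtens_index (i, k)) (mxtens_index (j, k)))).
  by move=> z; rewrite !mxE.
by apply: cc_sum.
Qed.

Lemma cc_tr p (F : V -> 'M[C]_p) : mc F -> cc (fun z => \tr (F z)).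
Proof. by move=> hF; apply: cc_sum. Qed.

Lemma cc_nip p (F G : V -> 'M[C]_p) : mc F -> mc G -> cc (fun z => nip (F z) (G z)).
Proof.
move=> hF hG; apply: cc_mul; first exact: cc_cst.
by apply: cc_tr; apply: mc_mul => //; apply: mc_adj.
Qed.

Lemma mc_markovT mA mB (psi : 'M[C]_(mA * mB)) (F : V -> 'M[C]_mB) :
  mc F -> mc (fun z => markovT psi (F z)).
Proof.
move=> hF; apply: mc_scale; apply: mc_ptraceB; apply: mc_mul; last exact: mc_cst.
by apply: mc_tens => //; apply: mc_cst.
Qed.

End Top.

Section Max.
Local Open Scope classical_set_scope.
Local Open Scope ring_scope.
Variable R : realType.
Local Notation C := R[i].
Variables (mA mB : nat) (psi : 'M[C]_(mA * mB)).
Hypothesis hB : (1 < mB)%N.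
Local Notation N := (mB * mB)%N.
Local Notation V := 'rV[R]_(N + N).

Lemma sum_tensR m n (F : 'I_(m * n) -> R) :
  \sum_(a < m * n) F a = \sum_(i < m) \sum_(k < n) F (@mxtens_index m n (i, k)).
Proof.
rewrite pair_big /= (reindex (@mxtens_index m n)) /=; last first.
  by exists (@mxtens_unindex m n) => x _; [apply: mxtens_indexK | apply: mxtens_unindexK].
by apply: eq_bigr => -[i k].
Qed.

Definition emb (z : V) : 'M[C]_mB := \matrix_(i, j)
  ((z 0 (lshift N (@mxtens_index mB mB (i, j)))) +i* (z 0 (rshift N (@mxtens_index mB mB (i, j)))))%C.

Definition unemb (Q : 'M[C]_mB) : V :=
  row_mx (\row_k complex.Re (Q (@mxtens_unindex mB mB k).1 (@mxtens_unindex mB mB k).2))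
         (\row_k complex.Im (Q (@mxtens_unindex mB mB k).1 (@mxtens_unindex mB mB k).2)).

Lemma emb_unemb Q : emb (unemb Q) = Q.
Proof.
apply/matrixP => i j; rewrite /emb /unemb mxE row_mxEl row_mxEr !mxE mxtens_indexK /=.
by case: (Q i j).
Qed.

Lemma mc_emb : mc emb.
Proof.
move=> i j; apply: (cc_ext (f := fun z => ((z 0 (lshift N (@mxtens_index mB mB (i, j)))) +i* (z 0 (rshift N (@mxtens_index mB mB (i, j)))))%C)).
  by move=> z; rewrite mxE.
exact: cc_coord.
Qed.

Lemma N2_real m (X : 'M[C]_m) :
  N2 X = (m%:R)^-1 * \sum_(i < m) \sum_(k < m) (complex.Re (X k i) ^+ 2 + complex.Im (X k i) ^+ 2).
Proof.
rewrite /N2 nip_self.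
under eq_bigr => i _ do under eq_bigr => k _ do rewrite -add_Re2_Im2.
set S := \sum_(i < m) _.
have -> : (m%:R : C)^-1 * \sum_(i < m) \sum_(k < m) ((complex.Re (X k i) ^+ 2 + complex.Im (X k i) ^+ 2)%:C)%C
   = (((m%:R)^-1 * S)%:C)%C.
  rewrite rmorphM fmorphV rmorph_nat rmorph_sum; congr (_ * _); apply: eq_bigr => i _.
  by rewrite rmorph_sum.
by [].
Qed.


Lemma sumsq_emb (z : V) : \sum_(t < N + N) z 0 t ^+ 2 = mB%:R * N2 (emb z).
Proof.
have hm : (mB%:R : R) != 0 by rewrite pnatr_eq0 -lt0n; apply: ltn_trans hB.
rewrite N2_real mulrA divff // mul1r big_split_ord /= !sum_tensR -big_split /=.
rewrite [RHS]exchange_big /=; apply: eq_bigr => i _; rewrite -big_split /=.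
by apply: eq_bigr => k _; rewrite !mxE.
Qed.

Lemma coord_bound (z : V) t : N2 (emb z) = 1 -> - mB%:R <= z 0 t <= mB%:R.
Proof.
move=> h.
have h1 : z 0 t ^+ 2 <= mB%:R.
  have := sumsq_emb z; rewrite h mulr1 => <-; rewrite (bigD1 t) //= lerDl.
  by apply: sumr_ge0 => s _; rewrite sqr_ge0.
have h2 : (1 : R) <= mB%:R by rewrite ler1n; apply: ltnW.
apply/andP; split; nra.
Qed.


Lemma exists_max : exists Q0 : 'M[C]_mB, [/\ \tr Q0 = 0, N2 Q0 = 1 &
  forall Q, \tr Q = 0 -> N2 Q = 1 -> N2 (markovT psi Q) <= N2 (markovT psi Q0)].
Proof.
pose f1 z := complex.Re (\tr (emb z)); pose f2 z := complex.Im (\tr (emb z)).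
pose f3 z := N2 (emb z); pose f z := N2 (markovT psi (emb z)).
have c1 : continuous f1 := (cc_tr mc_emb).1.
have c2 : continuous f2 := (cc_tr mc_emb).2.
have c3 : continuous f3 := (cc_nip mc_emb mc_emb).1.
have cf : continuous f := (cc_nip (mc_markovT psi mc_emb) (mc_markovT psi mc_emb)).1.
pose K := (f1 @^-1` [set x : R | x = 0]) `&` ((f2 @^-1` [set x : R | x = 0]) `&` (f3 @^-1` [set x : R | x = 1])).
have Kcl : closed K.
  apply: closedI; [|apply: closedI]; apply: preimage_closed; try apply: closed_eq.
  - by move=> x _; apply: c1.
  - by move=> x _; apply: c2.
  - by move=> x _; apply: c3.
pose M : R := mB%:R.
have Kbox : K `<=` [set v : V | forall i, `[- M, M]%classic (v ord0 i)].
  move=> z [_ [_ h3]] i /=; rewrite /= in_itv /=; exact: coord_bound.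
have Kco : compact K.
  apply: (subclosed_compact Kcl _ Kbox).
  by apply: (@rV_compact _ _ (fun=> `[- M, M]%classic)) => i; exact: segment_compact.
have [X [_ tX NX]] := @tz_unit R _ hB.
have inK Q : \tr Q = 0 -> N2 Q = 1 -> K (unemb Q).
  move=> tQ NQ; have E : emb (unemb Q) = Q := emb_unemb Q.
  split; [|split]; [change (f1 (unemb Q) = 0) | change (f2 (unemb Q) = 0) |
     change (f3 (unemb Q) = 1)]; rewrite /f1 /f2 /f3 E ?tQ ?NQ //.
have K0 : K !=set0 by exists (unemb X); apply: inK.
have fc : {within K, continuous f} by apply: continuous_subspaceT.
have [c cK cmax] := EVT_max_rV K0 Kco fc.
move: (cK); rewrite inE => -[h1 [h2 h3]].
change (f1 c = 0) in h1; change (f2 c = 0) in h2; change (f3 c = 1) in h3.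
exists (emb c); split.
- move: h1 h2; rewrite /f1 /f2; case: (\tr (emb c)) => a b /= -> ->.
  by [].
- exact: h3.
- move=> Q tQ NQ; have := cmax (unemb Q); rewrite /f emb_unemb; apply.
  by rewrite inE; apply: inK.
Qed.

End Max.

Section Main.
Variable R : realType.
Local Notation C := R[i].

Lemma sup_max (E : set R) x : E x -> (forall y, E y -> y <= x) -> sup E = x.
Proof.
move=> Ex ub; apply/le_anti/andP; split.
  by apply: ge_sup => //; exists x.
by apply: sup_upper_bound => //; split; [exists x | exists x].
Qed.

Lemma cabs0 : cabs (0 : C) = 0.
Proof. by have := cabsR (R:=R) 0; rewrite normr0. Qed.

Lemma norm2'0 m : norm2' (0 : 'M[C]_m) = 0.
Proof. by rewrite norm2'E /N2 nip0r sqrtr0. Qed.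

Lemma norm2'_1 m (X : 'M[C]_m) : N2 X = 1 -> norm2' X = 1.
Proof. by rewrite norm2'E => ->; rewrite sqrtr1. Qed.

Lemma norm2'_1' m (X : 'M[C]_m) : norm2' X = 1 -> N2 X = 1.
Proof.
move=> h; have := sqr_sqrtr (N2_ge0 X); rewrite -norm2'E h expr1n => <- //.
Qed.

Lemma herm_scaleR m (x : R) (X : 'M[C]_m) : is_hermitian X -> is_hermitian ((x%:C)%C *: X).
Proof. by rewrite /is_hermitian adjmxZ cjR => ->. Qed.

Lemma pstar m (Y : 'M[C]_m) : Y != 0 ->
  let Pstar := (((norm2' Y)^-1)%:C)%C *: Y in
  norm2' Pstar = 1 /\ cabs (nip Pstar Y) = norm2' Y.
Proof.
move=> hY Ps; have N0 : 0 < N2 Y.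
  rewrite lt_neqAle N2_ge0 andbT eq_sym; apply/eqP => /N2_eq0 h; by rewrite h eqxx in hY.
have n0 : 0 < norm2' Y by rewrite norm2'E sqrtr_gt0.
have nY : N2 Y = norm2' Y ^+ 2 by rewrite norm2'E sqr_sqrtr // ltW.
split.
  apply: norm2'_1; rewrite /Ps N2_scale nY exprVn mulVf // expf_neq0 // gt_eqF //.
rewrite /Ps nip_scaleR N2E -rmorphM cabsR nY expr2 mulrA mulVf ?gt_eqF // mul1r.
by rewrite gtr0_norm.
Qed.

Lemma part1 mA mB (psi : 'M[C]_(mA * mB)) (hA : (0 < mA)%N) (Q : 'M[C]_mB) :
  [/\ (forall P : 'M[C]_mA, norm2' P = 1 ->
            cabs (corr psi P Q) <= norm2' (markovT psi Q)),
         (exists P : 'M[C]_mA, norm2' P = 1 /\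
            cabs (corr psi P Q) = norm2' (markovT psi Q))
       & (markovT psi Q != 0 ->
            let Pstar := (((norm2' (markovT psi Q))^-1)%:C)%C *: markovT psi Q in
            norm2' Pstar = 1 /\ cabs (corr psi Pstar Q) = norm2' (markovT psi Q))].
Proof.
split.
- by move=> P hP; rewrite corr_nip //; apply: cs_unit.
- case: (eqVneq (markovT psi Q) 0) => [h|h].
    exists 1%:M; split; first by apply: norm2'_1; apply: N2_one.
    by rewrite corr_nip // h nip0r cabs0 norm2'0.
  have [h1 h2] := pstar h; exists ((((norm2' (markovT psi Q))^-1)%:C)%C *: markovT psi Q).
  by split => //; rewrite corr_nip.
- by move=> h; have [h1 h2] := pstar h; split => //; rewrite corr_nip.
Qed.


Lemma herm_split0 m (Q : 'M[C]_m) : \tr Q = 0 -> exists H1 H2 : 'M[C]_m,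
  [/\ is_hermitian H1, is_hermitian H2, \tr H1 = 0, \tr H2 = 0 & Q = H1 + 'i%C *: H2].
Proof.
move=> tQ; have [h1 h2 e] := herm_decomp Q.
exists (((2^-1 : R)%:C)%C *: (Q + adjmx Q)), ((- ('i%C / 2)) *: (Q - adjmx Q)); split => //.
- by rewrite mxtraceZ mxtraceD tr_adj tQ cj0 addr0 mulr0.
- by rewrite mxtraceZ linearB /= tr_adj tQ cj0 subr0 mulr0.
Qed.

Lemma hom_bound mA mB (psi : 'M[C]_(mA * mB)) (Q0 : 'M[C]_mB)
  (Q0max : forall Q, \tr Q = 0 -> N2 Q = 1 -> N2 (markovT psi Q) <= N2 (markovT psi Q0))
  (H : 'M[C]_mB) : \tr H = 0 -> N2 (markovT psi H) <= N2 (markovT psi Q0) * N2 H.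
Proof.
move=> tH; case: (eqVneq (N2 H) 0) => [h|h].
  by rewrite h mulr0 (N2_eq0 h) markovT0 /N2 nip0r.
have hp : 0 < N2 H by rewrite lt_neqAle eq_sym h N2_ge0.
move: (Num.sqrt (N2 H)) (sqr_sqrtr (ltW hp)) (sqrtr_gt0 (N2 H)) => s ss.
rewrite hp => s0.
have NH' : N2 (((s^-1)%:C)%C *: H) = 1 by rewrite N2_scale exprVn ss mulVf // gt_eqF.
have tH' : \tr (((s^-1)%:C)%C *: H) = 0 by rewrite mxtraceZ tH mulr0.
have := Q0max _ tH' NH'; rewrite markovTZ N2_scale exprVn ss => hle.
by have := ler_wpM2l (N2_ge0 H) hle; rewrite mulrA mulfV ?gt_eqF // mul1r mulrC.
Qed.

Lemma real_aux (r n1 n2 a1 a2 : R) : a1 <= r * n1 -> a2 <= r * n2 -> r = a1 + a2 ->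
  r * n1 + r * n2 = r -> a1 = r * n1 /\ a2 = r * n2.
Proof. move=> *; split; lra. Qed.

Lemma real_aux2 (n1 n2 : R) : n1 <= 0 -> 0 <= n1 -> n1 + n2 = 1 -> 0 < n2.
Proof. move=> *; lra. Qed.

Lemma part3 mA mB (psi : 'M[C]_(mA * mB)) (hA : (1 < mA)%N)
  (herm : adjmx psi = psi)
  (trT : forall Q, \tr Q = 0 -> \tr (markovT psi Q) = 0)
  (Q0 : 'M[C]_mB) (tQ0 : \tr Q0 = 0) (NQ0 : N2 Q0 = 1)
  (Q0max : forall Q, \tr Q = 0 -> N2 Q = 1 -> N2 (markovT psi Q) <= N2 (markovT psi Q0)) :
  exists (P : 'M[C]_mA) (Q : 'M[C]_mB),
    [/\ is_hermitian P, is_hermitian Q, \tr P = 0 /\ \tr Q = 0,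
        norm2' P = 1 /\ norm2' Q = 1
      & cabs (corr psi P Q) = norm2' (markovT psi Q0)].
Proof.
have hA0 : (0 < mA)%N by apply: ltn_trans hA.
have [H1 [H2 [hH1 hH2 tH1 tH2 eQ]]] := herm_split0 tQ0.
have hom := hom_bound Q0max.
have [r2 er2] : exists r2, r2 = N2 (markovT psi Q0) by eexists.
rewrite -er2 in hom.
have hermT H : is_hermitian H -> is_hermitian (markovT psi H).
  by move=> hH; rewrite /is_hermitian (markovT_adj _ herm) hH.
have eT : r2 = N2 (markovT psi H1) + N2 (markovT psi H2).
  rewrite er2 eQ markovTD markovTZ N2_herm_split; [by [] | exact: hermT hH1 | exact: hermT hH2].
have eN : N2 H1 + N2 H2 = 1 by rewrite -N2_herm_split; [rewrite -eQ; exact: NQ0 | exact: hH1 | exact: hH2].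
have b1 := hom H1 tH1; have b2 := hom H2 tH2.
have e12 : r2 * N2 H1 + r2 * N2 H2 = r2 by rewrite -mulrDr eN mulr1.
have [e1 e2] := real_aux b1 b2 eT e12.
have [H [hH tH pH eH]] : exists H, [/\ is_hermitian H, \tr H = 0, 0 < N2 H &
    N2 (markovT psi H) = r2 * N2 H].
  case: (ltrP 0 (N2 H1)) => h.
    by exists H1; split; [exact: hH1 | exact: tH1 | exact: h | exact: e1].
  exists H2; split; [exact: hH2 | exact: tH2 | | exact: e2].
  exact: (real_aux2 h (N2_ge0 H1) eN).
have [s [ss s0]] : exists s : R, s ^+ 2 = N2 H /\ 0 < s.
  by exists (Num.sqrt (N2 H)); split; [exact: sqr_sqrtr (ltW pH) | rewrite sqrtr_gt0].
have sn : s != 0 by rewrite gt_eqF.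
have hQ : is_hermitian (((s^-1)%:C)%C *: H) by apply: herm_scaleR; exact: hH.
have tQ : \tr (((s^-1)%:C)%C *: H) = 0 by rewrite mxtraceZ tH mulr0.
have NQ : N2 (((s^-1)%:C)%C *: H) = 1.
  by rewrite N2_scale exprVn ss mulVf; [| by rewrite (gt_eqF pH)].
move: (((s^-1)%:C)%C *: H) hQ tQ NQ (markovTZ psi ((s^-1)%:C)%C H) => Q hQ tQ NQ eTQ.
have NTQ : norm2' (markovT psi Q) = norm2' (markovT psi Q0).
  rewrite eTQ norm2'E N2_scale eH exprVn ss mulrCA mulVf; last by rewrite (gt_eqF pH).
  by rewrite mulr1 norm2'E er2.
have [PA [hPA tPA NPA]] := @tz_unit R _ hA.
case: (eqVneq (markovT psi Q) 0) => [h|h].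
  exists PA, Q; split; [exact: hPA | exact: hQ | split; [exact: tPA | exact: tQ] |
    split; apply: norm2'_1; [exact: NPA | exact: NQ] |].
  by rewrite (corr_nip _ _ _ hA0) h nip0r cabs0 -NTQ h norm2'0.
have [_ _ /(_ h) [h1 h2]] := part1 psi hA0 Q.
exists ((((norm2' (markovT psi Q))^-1)%:C)%C *: markovT psi Q), Q; split.
- by apply: herm_scaleR; apply: hermT; exact: hQ.
- exact: hQ.
- by split; [rewrite mxtraceZ (trT _ tQ) mulr0 | exact: tQ].
- by split; [exact: h1 | apply: norm2'_1; exact: NQ].
- exact: (etrans h2 NTQ).
Qed.

End Main.

Unset Implicit Arguments.
Unset Strict Implicit.
Theorem proposition3p10 (R : realType) (mA mB : nat)
  (hA : (1 < mA)%N) (hB : (1 < mB)%N) (psi : 'M[R[i]]_(mA * mB))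
  (hpsi : is_state psi)
  (hpsiA : ptraceB psi = (mA%:R)^-1 *: 1%:M)
  (hpsiB : ptraceA psi = (mB%:R)^-1 *: 1%:M) :
  (forall Q : 'M[R[i]]_mB,
     [/\ (forall P : 'M[R[i]]_mA, norm2' P = 1 ->
            cabs (corr psi P Q) <= norm2' (markovT psi Q)),
         (exists P : 'M[R[i]]_mA, norm2' P = 1 /\
            cabs (corr psi P Q) = norm2' (markovT psi Q))
       & (markovT psi Q != 0 ->
            let Pstar := (((norm2' (markovT psi Q))^-1)%:C)%C *: markovT psi Q in
            norm2' Pstar = 1 /\ cabs (corr psi Pstar Q) = norm2' (markovT psi Q))])
  /\ (exists Q0 : 'M[R[i]]_mB,
        [/\ \tr Q0 = 0, norm2' Q0 = 1, maxcorr psi = norm2' (markovT psi Q0)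
          & forall Q : 'M[R[i]]_mB, \tr Q = 0 -> norm2' Q = 1 ->
              norm2' (markovT psi Q) <= maxcorr psi])
  /\ (exists (P : 'M[R[i]]_mA) (Q : 'M[R[i]]_mB),
        [/\ is_hermitian P, is_hermitian Q, \tr P = 0 /\ \tr Q = 0,
            norm2' P = 1 /\ norm2' Q = 1
          & cabs (corr psi P Q) = maxcorr psi]).
Proof.
have hA0 : (0 < mA)%N by apply: ltn_trans hA.
have herm : adjmx psi = psi by case: hpsi => -[].
have P1 := part1 psi hA0.
have trT Q : \tr Q = 0 -> \tr (markovT psi Q) = 0.
  by move=> tQ; rewrite tr_markovT hpsiB -scalemxAr mulmx1 mxtraceZ tQ !mulr0.
have [PA [hPA tPA NPA]] := @tz_unit R _ hA.
have [Q0 [tQ0 NQ0 Q0max]] := @exists_max R mA mB psi hB.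
have ub : forall Q, \tr Q = 0 -> norm2' Q = 1 ->
    norm2' (markovT psi Q) <= norm2' (markovT psi Q0).
  move=> Q tQ /norm2'_1' NQ; rewrite (norm2'E (markovT psi Q)) (norm2'E (markovT psi Q0)).
  exact: (ler_wsqrtr (Q0max Q tQ NQ)).
have mc : maxcorr psi = norm2' (markovT psi Q0).
  apply: sup_max.
    case: (eqVneq (markovT psi Q0) 0) => [h|h].
      exists PA, Q0; split; [exact: tPA | exact: tQ0 | exact: norm2'_1 | exact: norm2'_1 |].
      by rewrite (corr_nip _ _ _ hA0) h nip0r cabs0 norm2'0.
    have [_ _ /(_ h) [h1 h2]] := P1 Q0.
    exists ((((norm2' (markovT psi Q0))^-1)%:C)%C *: markovT psi Q0), Q0; split.
    - by rewrite mxtraceZ (trT _ tQ0) mulr0.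
    - exact: tQ0.
    - exact: h1.
    - exact: norm2'_1.
    - exact: (esym h2).
  move=> y [P [Q [tP tQ nP nQ ->]]].
  have [h _ _] := P1 Q; apply: le_trans (h P nP) _; exact: ub.
split; first exact: P1.
split.
  exists Q0; split; [exact: tQ0 | exact: norm2'_1 | exact: mc |].
  by move=> Q tQ nQ; rewrite mc; apply: ub.
rewrite mc; exact: (part3 hA herm trT tQ0 NQ0 Q0max).
Qed.
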